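(* There is an absolute constant $C>0$ such that for every prime $p$ and integer $n\ge1$, with $G=\mathbb{Z}_p^n$: (i) there is a deterministic query algorithm which, for every $f$ hiding a subgroup $H\le G$, decides whether $H$ is trivial using at most $C\sqrt{p^{\,n-k}}$ queries; (ii) there is a deterministic query algorithm which, for every $f$ hiding a subgroup $H\le G$, outputs $H$ using at most $C\max\{k,\sqrt{\max\{1,k\}\cdot p^{\,n-k}}\}$ queries; here $k=\log_p|H|$, which is not known to the algorithms in advance.
   Context: Hidden subgroup problem ($\mathsf{HSP}$): $G$ is a finite group known to the algorithm, $X$ a finite set, and $f:G\to X$ is an unknown function with the promise that there is a subgroup $H\le G$ such that for all $g_1,g_2\in G$, $f(g_1)=f(g_2)$ iff $g_1H=g_2H$; we say $f$ hides $H$. The identification version asks to output $H$; the decision version asks whether $H$ is trivial. A deterministic query algorithm accesses $f$ only by adaptively choosing $g\in G$ and receiving $f(g)$ (a query). $\mathbb{Z}_p^n$ is the $n$-fold direct product of the additive group of integers mod $p$. *)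

(* Defs.v *)
From Stdlib Require Import Reals.
From mathcomp Require Import all_boot all_algebra.
Set Implicit Arguments. Unset Strict Implicit. Unset Printing Implicit Defensive.
Import GRing.Theory.
Local Open Scope ring_scope.

Definition Zpn (p n : nat) := 'rV['F_p]_n.

Definition is_subgroup (G : finZmodType) (H : {set G}) : Prop :=
  0 \in H /\ (forall x y, x \in H -> y \in H -> x - y \in H).

Definition coset (G : finZmodType) (H : {set G}) (g : G) : {set G} :=
  [set g + h | h in H].

Definition hides (G : finZmodType) (X : Type) (f : G -> X) (H : {set G}) : Prop :=
  forall g1 g2, f g1 = f g2 <-> coset H g1 = coset H g2.

(* Since the oracle's codomain X
   is an arbitrary (unknown) finite set, the information an answer carries is
   its equality pattern with the previous answers: the continuation receives
   the list [a_1 == a; ...; a_m == a] comparing the new answer a with all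
   previous answers a_1..a_m (in query order). *)
Inductive qtree (G Out : Type) : Type :=
| Leaf : Out -> qtree G Out
| Query : G -> (seq bool -> qtree G Out) -> qtree G Out.

Arguments Leaf {G Out}.
Arguments Query {G Out}.

Fixpoint run_from (G Out : Type) (X : eqType) (f : G -> X) (hist : seq X)
    (t : qtree G Out) {struct t} : Out * nat :=
  match t with
  | Leaf o => (o, 0%N)
  | Query g k =>
      let a := f g in
      let r := run_from f (rcons hist a) (k [seq b == a | b <- hist]) in
      (r.1, r.2.+1)
  end.

Definition run (G Out : Type) (X : eqType) (t : qtree G Out) (f : G -> X) :=
  run_from f [::] t.
Definition output (G Out : Type) (X : eqType) (t : qtree G Out) (f : G -> X) :=
  (run t f).1.
Definition nqueries (G Out : Type) (X : eqType) (t : qtree G Out) (f : G -> X) :=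
  (run t f).2.

(* Main.v *)
Require Import Defs.
From Stdlib Require Import Reals FunctionalExtensionality.
From mathcomp Require Import all_boot all_algebra.
From mathcomp Require Import zify.
From Stdlib Require Import Lia.
Set Implicit Arguments. Unset Strict Implicit. Unset Printing Implicit Defensive.
Import GRing.Theory.

Section Prog.
Variable G : finZmodType.

Inductive prog (A : Type) : Type :=
| Ret : A -> prog A
| Look : seq G -> ((G -> G -> bool) -> prog A) -> prog A.
Arguments Ret {A}.
Arguments Look {A}.

Definition relL (H : {set G}) (L : seq G) (x y : G) : bool :=
  [&& x \in L, y \in L & ((x - y)%R \in H)].

Fixpoint eval A (H : {set G}) (P : prog A) : A :=
  match P with Ret a => a | Look L k => eval H (k (relL H L)) end.

Fixpoint pts A (H : {set G}) (P : prog A) : seq G :=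
  match P with Ret _ => [::] | Look L k => L ++ pts H (k (relL H L)) end.

Fixpoint bind A B (P : prog A) (g : A -> prog B) : prog B :=
  match P with Ret a => g a | Look L k => Look L (fun r => bind (k r) g) end.

Lemma eval_bind A B H (P : prog A) (g : A -> prog B) :
  eval H (bind P g) = eval H (g (eval H P)).
Proof. by elim: P => //= L k IH; rewrite IH. Qed.

Lemma pts_bind A B H (P : prog A) (g : A -> prog B) :
  pts H (bind P g) = pts H P ++ pts H (g (eval H P)).
Proof. by elim: P => //= L k IH; rewrite IH catA. Qed.

Fixpoint ensure_all Out (L : seq G) (qs : seq G) (ids : seq nat)
   (k : seq G -> seq nat -> qtree G Out) : qtree G Out :=
  match L with
  | [::] => k qs ids
  | x :: L' => if x \in qs then ensure_all L' qs ids k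
               else Query x (fun pat => ensure_all L' (rcons qs x) (rcons ids (find id pat)) k)
  end.

Definition crel (L qs : seq G) (ids : seq nat) (x y : G) : bool :=
  [&& x \in L, y \in L & nth 0%N ids (index x qs) == nth 0%N ids (index y qs)].

Fixpoint cmp A (P : prog A) (qs : seq G) (ids : seq nat) : qtree G A :=
  match P with
  | Ret a => Leaf a
  | Look L k => ensure_all L qs ids (fun qs' ids' => cmp (k (crel L qs' ids')) qs' ids')
  end.

Definition ens (L qs : seq G) := foldl (fun qs x => if x \in qs then qs else rcons qs x) qs L.

Section Run.
Variable X : eqType.
Variable f : G -> X.

Definition idsof (qs : seq G) := [seq index (f q) (map f qs) | q <- qs].

Lemma idsof_rcons qs x :
  idsof (rcons qs x) = rcons (idsof qs) (index (f x) (map f qs)).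
Proof.
rewrite /idsof !map_rcons; congr rcons.
  apply/eq_in_map => q qin; rewrite -cats1 index_cat map_f //.
rewrite -cats1 index_cat; case: ifP => // /negbT nin; by rewrite /= eqxx addn0 memNindex.
Qed.

Lemma ens_uniq L qs : uniq qs -> uniq (ens L qs).
Proof.
elim: L qs => //= x L IH qs uq; apply: IH; case: ifP => // /negbT xn.
by rewrite rcons_uniq xn.
Qed.

Lemma ens_sub L qs y : y \in ens L qs = (y \in qs) || (y \in L).
Proof.
elim: L qs => [|x L IH] qs /=; first by rewrite orbF.
rewrite IH in_cons; case: ifP => xq.
  by case: (eqVneq y x) => [->|]; rewrite ?xq ?orbT.
by rewrite mem_rcons in_cons; case: (y == x); rewrite ?orbT.
Qed.

Lemma ens_size L qs : (size qs <= size (ens L qs))%N.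
Proof.
elim: L qs => //= x L IH qs; case: ifP => _ //.
by apply: leq_trans (IH _); rewrite size_rcons.
Qed.

Lemma run_ensure Out (L : seq G) qs (k : seq G -> seq nat -> qtree G Out) :
  run_from f (map f qs) (ensure_all L qs (idsof qs) k) =
  let qs' := ens L qs in
  ((run_from f (map f qs') (k qs' (idsof qs'))).1,
   ((run_from f (map f qs') (k qs' (idsof qs'))).2 + (size qs' - size qs))%N).
Proof.
elim: L qs => [|x L IH] qs /=.
  by rewrite subnn addn0; case: (run_from _ _ _).
case: ifP => xq; first exact: IH.
rewrite [run_from _ _ (Query _ _)]/=.
have -> : forall hs, find id [seq b == f x | b <- hs] = index (f x) hs.
  by move=> hs; rewrite find_map /index; congr find.
rewrite -idsof_rcons -map_rcons IH /=.
have := ens_size L (rcons qs x); rewrite size_rcons => hs.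
by rewrite -addnS subnSK.
Qed.
End Run.

Section Cmp.
Variable X : eqType.
Variable f : G -> X.
Variable H : {set G}.
Hypothesis hrel : forall x y, (f x == f y) = ((x - y)%R \in H).

Lemma crel_eq L qs : {subset L <= qs} -> crel L qs (idsof f qs) = relL H L.
Proof.
move=> sub; apply: functional_extensionality => x; apply: functional_extensionality => y.
rewrite /crel /relL; case xL: (x \in L) => //; case yL: (y \in L) => //=.
have xq := sub _ xL; have yq := sub _ yL.
rewrite /idsof (nth_map x) ?index_mem // (nth_map y) ?index_mem // !nth_index //.
rewrite -hrel; apply/eqP/eqP => [e|->] //.
by apply: (index_inj (f x)) e; apply: map_f.
Qed.

Lemma run_cmp A (P : prog A) qs : uniq qs ->
  (run_from f (map f qs) (cmp P qs (idsof f qs))).1 = eval H P /\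
  ((run_from f (map f qs) (cmp P qs (idsof f qs))).2 + size qs <=
     #|[set x in qs ++ pts H P]|)%N.
Proof.
elim: P qs => [a|L k IH] qs uq /=.
  by split=> //; rewrite cats0 cardsE add0n (card_uniqP uq).
rewrite run_ensure /=.
set qs' := ens L qs.
have subL : {subset L <= qs'} by move=> y yL; rewrite /qs' ens_sub yL orbT.
rewrite crel_eq //.
have [e1 e2] := IH (relL H L) qs' (ens_uniq L uq).
split=> //.
have hs := ens_size L qs; rewrite -/qs' in hs.
rewrite -addnA subnK //; apply: leq_trans e2 _.
apply: subset_leq_card; apply/subsetP => y; rewrite !inE !mem_cat.
by rewrite /qs' ens_sub; case/orP => [/orP[]|] ->; rewrite ?orbT.
Qed.

Lemma nq_cmp A (P : prog A) :
  output (cmp P [::] [::]) f = eval H P /\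
  (nqueries (cmp P [::] [::]) f <= #|[set x in pts H P]|)%N.
Proof.
have [e1 e2] := run_cmp P (qs:=[::]) isT.
by rewrite /output /nqueries /run; split => //; rewrite addn0 in e2.
Qed.
End Cmp.

End Prog.

Section Hides.
Variable G : finZmodType.
Variable H : {set G}.
Hypothesis sgH : is_subgroup H.
Local Open Scope ring_scope.

Lemma sg0 : (0 : G) \in H. Proof. by case: sgH. Qed.
Lemma sgB x y : x \in H -> y \in H -> (x - y)%R \in H. Proof. by case: sgH => _; apply. Qed.
Lemma sgN x : x \in H -> (- x)%R \in H.
Proof. by move=> hx; rewrite -sub0r sgB // sg0. Qed.
Lemma sgD x y : x \in H -> y \in H -> (x + y)%R \in H.
Proof. by move=> hx hy; rewrite -[y]opprK sgB // sgN. Qed.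
Lemma sgMn x m : x \in H -> (x *+ m)%R \in H.
Proof. by move=> hx; elim: m => [|m IH]; rewrite ?mulr0n ?sg0 // mulrS sgD. Qed.

Lemma coset_eq (x y : G) : (coset H x == coset H y) = ((x - y)%R \in H).
Proof.
apply/eqP/idP => [e|hxy].
  have : x \in coset H y by rewrite -e; apply/imsetP; exists 0%R; rewrite ?addr0 // sg0.
  by case/imsetP => h hh ->; rewrite addrC addKr.
apply/setP => z; apply/imsetP/imsetP => [[h hh ->]|[h hh ->]].
  exists (x - y + h)%R; first exact: sgD.
  by rewrite addrA addrCA subrr addr0.
exists (y - x + h)%R; last by rewrite addrA addrCA subrr addr0.
by apply: sgD => //; rewrite -opprB sgN.
Qed.

Lemma hides_rel (X : eqType) (f : G -> X) : hides f H ->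
  forall x y, (f x == f y) = ((x - y)%R \in H).
Proof.
move=> hf x y; rewrite -coset_eq; apply/eqP/eqP; by case: (hf x y).
Qed.
End Hides.
Arguments Ret {G A}.
Arguments Look {G A}.

Section Lin.
Variables p n : nat.
Hypothesis pp : prime p.
Local Notation G := (Zpn p n).
Local Open Scope ring_scope.

Lemma p_gt1 : (1 < p)%N. Proof. exact: prime_gt1. Qed.

Lemma natr_F (c : 'F_p) : (nat_of_ord c)%:R = c.
Proof. exact: natr_Zp. Qed.

Lemma ltn_F (c : 'F_p) : (nat_of_ord c < p)%N.
Proof.
have h := card_Fp pp; rewrite card_ord in h.
by apply: leq_trans (ltn_ord c) _; rewrite h.
Qed.

Definition ev (d : 'I_n) : G := \row_j ((j == d)%:R).

Lemma evE d j : ev d 0 j = (j == d)%:R.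
Proof. by rewrite mxE. Qed.

Definition VN (N : seq 'I_n) : {set G} :=
  [set v : G | [forall j, (j \notin N) ==> (v 0 j == 0)]].

Definition W (ds : seq 'I_n) : {set G} :=
  [set v : G | [forall j, (j \in ds) ==> (v 0 j == 0)]].

Lemma VNP N (v : G) : reflect (forall j, j \notin N -> v 0 j = 0) (v \in VN N).
Proof.
rewrite inE; apply: (iffP forallP) => [h j jn|h j].
  by apply/eqP; move/implyP: (h j); apply.
by apply/implyP => jn; rewrite h.
Qed.

Lemma WP ds (v : G) : reflect (forall j, j \in ds -> v 0 j = 0) (v \in W ds).
Proof.
rewrite inE; apply: (iffP forallP) => [h j jn|h j].
  by apply/eqP; move/implyP: (h j); apply.
by apply/implyP => jn; rewrite h.
Qed.

Lemma VN0 N : 0 \in VN N. Proof. by apply/VNP => j _; rewrite mxE. Qed.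
Lemma VND N (x y : G) : x \in VN N -> y \in VN N -> x + y \in VN N.
Proof. by move=> /VNP hx /VNP hy; apply/VNP => j jn; rewrite mxE hx ?hy ?addr0. Qed.
Lemma VNN N (x : G) : x \in VN N -> - x \in VN N.
Proof. by move=> /VNP hx; apply/VNP => j jn; rewrite mxE hx ?oppr0. Qed.
Lemma VNB N (x y : G) : x \in VN N -> y \in VN N -> x - y \in VN N.
Proof. by move=> hx hy; rewrite VND ?VNN. Qed.
Lemma VNZ N c (x : G) : x \in VN N -> c *: x \in VN N.
Proof. by move=> /VNP hx; apply/VNP => j jn; rewrite mxE hx ?mulr0. Qed.
Lemma VNS N N' : {subset N <= N'} -> VN N \subset VN N'.
Proof.
move=> s; apply/subsetP => v /VNP h; apply/VNP => j jn; apply: h.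
by apply: contra jn; apply: s.
Qed.
Lemma ev_VN N j : j \in N -> ev j \in VN N.
Proof. by move=> jN; apply/VNP => i iN; rewrite evE; case: eqP => // e; rewrite e jN in iN. Qed.

Lemma W0 ds : 0 \in W ds. Proof. by apply/WP => j _; rewrite mxE. Qed.
Lemma WD ds (x y : G) : x \in W ds -> y \in W ds -> x + y \in W ds.
Proof. by move=> /WP hx /WP hy; apply/WP => j jn; rewrite mxE hx ?hy ?addr0. Qed.
Lemma WN ds (x : G) : x \in W ds -> - x \in W ds.
Proof. by move=> /WP hx; apply/WP => j jn; rewrite mxE hx ?oppr0. Qed.
Lemma WB ds (x y : G) : x \in W ds -> y \in W ds -> x - y \in W ds.
Proof. by move=> hx hy; rewrite WD ?WN. Qed.
Lemma WZ ds c (x : G) : x \in W ds -> c *: x \in W ds.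
Proof. by move=> /WP hx; apply/WP => j jn; rewrite mxE hx ?mulr0. Qed.

Definition strip (j : 'I_n) (v : G) : G := v - v 0 j *: ev j.

Lemma strip_at j (v : G) : strip j v 0 j = 0.
Proof. by rewrite !mxE eqxx mulr1 subrr. Qed.
Lemma strip_ne j (v : G) i : i != j -> strip j v 0 i = v 0 i.
Proof. by move=> ne; rewrite !mxE (negbTE ne) mulr0 subr0. Qed.
Lemma strip_eq j (v : G) : v = v 0 j *: ev j + strip j v.
Proof. by rewrite /strip addrC subrK. Qed.

Lemma card_VN N : uniq N -> #|VN N| = (p ^ size N)%N.
Proof.
elim: N => [|j N IH] /=.
  move=> _; transitivity #|[set (0 : G)]|; last by rewrite cards1.
  apply: eq_card => v.
  rewrite [RHS]inE; apply/VNP/eqP => [h|->]; last by move=> *; rewrite mxE.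
  by apply/rowP => i; rewrite h // mxE.
case/andP => jN uN.
have -> : VN (j :: N) = [set x.1 *: ev j + x.2 | x in setX [set: 'F_p] (VN N)].
  apply/setP => v; apply/idP/imsetP => [vin|[[c w] /setXP[_ win] ->]].
    exists (v 0 j, strip j v); last exact: strip_eq.
    apply/setXP; split; first by rewrite inE.
    apply/VNP => i iN; case: (eqVneq i j) => [->|ne]; first exact: strip_at.
    by rewrite strip_ne //; move/VNP: vin; apply; rewrite in_cons negb_or ne.
  by rewrite /= VND ?VNZ ?ev_VN ?mem_head //; apply: (subsetP (VNS _)) win => i; rewrite in_cons orbC => ->.
rewrite card_in_imset ?cardsX ?cardsT ?card_Fp ?IH ?expnS //.
move=> [c1 w1] [c2 w2] /setXP[_ /VNP h1] /setXP[_ /VNP h2] /= e.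
have e1 := congr1 (fun v : G => v 0 j) e; rewrite /= !mxE !eqxx !mulr1 h1 ?h2 // !addr0 in e1.
by rewrite e1 in e *; rewrite (addrI _ e).
Qed.


Lemma VNMn N (x : G) m : x \in VN N -> x *+ m \in VN N.
Proof. by move=> h; rewrite -scaler_nat VNZ. Qed.

Fixpoint spanS (Ps : seq G) : {set G} :=
  match Ps with
  | [::] => [set 0]
  | u :: Ps' => [set x.1 *: u + x.2 | x in setX [set: 'F_p] (spanS Ps')]
  end.

Lemma spanS0 Ps : 0 \in spanS Ps.
Proof.
elim: Ps => [|u Ps IH] /=; first by rewrite inE.
by apply/imsetP; exists (0, 0); rewrite ?scale0r ?addr0 //; apply/setXP; rewrite inE.
Qed.

Lemma spanS_cons u Ps c x : x \in spanS Ps -> c *: u + x \in spanS (u :: Ps).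
Proof. by move=> hx; apply/imsetP; exists (c, x) => //; apply/setXP; rewrite inE. Qed.

Lemma spanS_sub (H : {set G}) Ps : is_subgroup H -> (forall u, u \in Ps -> u \in H) ->
  spanS Ps \subset H.
Proof.
move=> sg; elim: Ps => [|u Ps IH] /= hP; apply/subsetP => x.
  by rewrite inE => /eqP ->; apply: sg0.
case/imsetP => [[c y]] /setXP [_ hy] ->; apply: sgD => //.
  by rewrite -(natr_F c) scaler_nat; apply: sgMn => //; apply: hP; rewrite mem_head.
by apply: (subsetP (IH _)) hy => w wP; apply: hP; rewrite in_cons wP orbT.
Qed.

Lemma spanS_W ds Ps : (forall u, u \in Ps -> u \in W ds) -> spanS Ps \subset W ds.
Proof.
elim: Ps => [|u Ps IH] /= hP; apply/subsetP => x.
  by rewrite inE => /eqP ->; apply: W0.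
case/imsetP => [[c y]] /setXP [_ hy] ->; apply: WD.
  by apply: WZ; apply: hP; rewrite mem_head.
by apply: (subsetP (IH _)) hy => w wP; apply: hP; rewrite in_cons wP orbT.
Qed.

Lemma card_sum_le (X Y Z : {set G}) :
  (forall x y, x \in X -> y \in Y -> x + y \in Z) ->
  (forall x x' y y', x \in X -> x' \in X -> y \in Y -> y' \in Y -> x + y = x' + y' -> x = x') ->
  (#|X| * #|Y| <= #|Z|)%N.
Proof.
move=> hZ hi; rewrite -cardsX.
have -> : #|setX X Y| = #|[set xy.1 + xy.2 | xy in setX X Y]|.
  rewrite card_in_imset // => [[x y] [x' y']] /setXP[hx hy] /setXP[hx' hy'] /= e.
  by have e1 := hi _ _ _ _ hx hx' hy hy' e; rewrite e1 in e *; rewrite (addrI _ e).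
apply: subset_leq_card; apply/subsetP => z /imsetP[[x y] /setXP[hx hy] ->]; exact: hZ.
Qed.

Lemma card_sum_eq (X Y Z : {set G}) :
  (forall x y, x \in X -> y \in Y -> x + y \in Z) ->
  (forall z, z \in Z -> exists2 x, x \in X & exists2 y, y \in Y & z = x + y) ->
  (forall x x' y y', x \in X -> x' \in X -> y \in Y -> y' \in Y -> x + y = x' + y' -> x = x') ->
  #|Z| = (#|X| * #|Y|)%N.
Proof.
move=> hZ hs hi; rewrite -cardsX.
have -> : #|setX X Y| = #|[set xy.1 + xy.2 | xy in setX X Y]|.
  rewrite card_in_imset // => [[x y] [x' y']] /setXP[hx hy] /setXP[hx' hy'] /= e.
  by have e1 := hi _ _ _ _ hx hx' hy hy' e; rewrite e1 in e *; rewrite (addrI _ e).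
apply: eq_card => z; apply/idP/imsetP => [/hs[x hx [y hy ->]]|[[x y] /setXP[hx hy] ->]].
  by exists (x, y) => //; apply/setXP.
exact: hZ.
Qed.

Definition coverR N s (A B : {set G}) : Prop :=
  [/\ A \subset VN N, B \subset VN N,
      (forall v, v \in VN N -> exists2 a, a \in A & exists2 b, b \in B & v = a + b),
      (#|B| <= 2 * s)%N & (s * #|A| <= 3 * maxn #|VN N| s)%N].

Lemma cover_exists N s : uniq N -> (0 < s)%N -> exists A B, coverR N s A B.
Proof.
move=> uN s0; elim: N uN => [|j N IH] /=.
  move=> _; exists [set 0], [set 0]; split.
  - by apply/subsetP => x; rewrite inE => /eqP ->; apply: VN0.
  - by apply/subsetP => x; rewrite inE => /eqP ->; apply: VN0.
  - move=> v /VNP h; exists 0; rewrite ?inE //; exists 0; rewrite ?inE ?addr0 //.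
    by apply/rowP => i; rewrite h // mxE.
  - by rewrite cards1 muln_gt0.
  - by rewrite cards1 muln1; lia.
case/andP => jN uN.
have cV : #|VN (j :: N)| = (p * p ^ size N)%N by rewrite card_VN /= ?jN ?uN // expnS.
have cV' := card_VN uN.
set P' := (p ^ size N)%N in cV cV'.
have P'0 : (0 < P')%N by rewrite expn_gt0 prime_gt0.
have sNV : VN N \subset VN (j :: N) by apply: VNS => i iN; rewrite in_cons iN orbT.
have ejV : ev j \in VN (j :: N) by apply: ev_VN; rewrite mem_head.
have decomp : forall v, v \in VN (j :: N) -> strip j v \in VN N.
  move=> v /VNP h; apply/VNP => i iN; case: (eqVneq i j) => [->|ne]; first exact: strip_at.
  by rewrite strip_ne // h // in_cons negb_or ne.
case: (leqP (p * P') s) => [big|small].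
  exists [set 0], (VN (j :: N)); split.
  - by apply/subsetP => x; rewrite inE => /eqP ->; apply: VN0.
  - by [].
  - by move=> v hv; exists 0; rewrite ?inE //; exists v; rewrite ?add0r.
  - by rewrite cV (leq_trans big) // leq_pmull.
  - by rewrite cards1 muln1; lia.
case: (leqP s P') => [sP|Ps].
  have [A' [B' [sA sB cov hB hA]]] := IH uN.
  exists [set x.1 *: ev j + x.2 | x in setX [set: 'F_p] A'], B'; split.
  - apply/subsetP => x /imsetP[[c a] /setXP[_ ha] ->].
    by apply: VND; [apply: VNZ | apply: (subsetP sNV); apply: (subsetP sA)].
  - exact: subset_trans sB sNV.
  - move=> v hv; have [a ha [b hb e]] := cov _ (decomp _ hv).
    exists (v 0 j *: ev j + a); first by apply/imsetP; exists (v 0 j, a) => //; apply/setXP; rewrite inE.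
    by exists b => //; rewrite -addrA -e -strip_eq.
  - exact: hB.
  - apply: leq_trans (leq_mul (leqnn s) (leq_imset_card _ _)) _.
    rewrite cardsX cardsT card_Fp // mulnCA; apply: leq_trans (leq_mul (leqnn p) hA) _.
    rewrite cV' (maxn_idPl sP) cV mulnCA leq_mul2l.
    by rewrite (leq_trans _ (leq_maxl _ _)).
set r := (s %/ P').+1.
have r0 : (0 < r)%N by [].
have rP : (s < r * P')%N by rewrite /r ltn_ceil.
have rp : (r <= p)%N by rewrite /r ltn_divLR.
set q := (p %/ r).+1.
exists [set ev j *+ (r * val i) | i : 'I_q],
       [set ev j *+ val x.1 + x.2 | x in setX [set: 'I_r] (VN N)]; split.
- by apply/subsetP => x /imsetP[i _ ->]; apply: VNMn.
- apply/subsetP => x /imsetP[[i b] /setXP[_ hb] ->].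
  by apply: VND; [apply: VNMn | apply: (subsetP sNV)].
- move=> v hv; set c := v 0 j.
  have cp := ltn_F c.
  have i1q : (c %/ r < q)%N by rewrite /q ltnS leq_div2r // ltnW.
  have i2r : (c %% r < r)%N by rewrite ltn_mod.
  exists (ev j *+ (r * val (Ordinal i1q))); first by apply/imsetP; exists (Ordinal i1q).
  exists (ev j *+ val (Ordinal i2r) + strip j v).
    by apply/imsetP; exists (Ordinal i2r, strip j v) => //; apply/setXP; rewrite inE decomp.
  rewrite /= addrA -mulrnDr mulnC -divn_eq {1}(strip_eq j v) -/c.
  by rewrite -{1}(natr_F c) scaler_nat.
- apply: leq_trans (leq_imset_card _ _) _; rewrite cardsX cardsT card_ord cV'.
  rewrite /r mulSn; move: (leq_trunc_div s P'); set t := (s %/ P' * P')%N; lia.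
- apply: leq_trans (leq_mul (leqnn s) (leq_imset_card _ _)) _.
  rewrite cardT size_enum_ord /q mulnS cV (maxn_idPl (ltnW small)).
  have h1 : (s * (p %/ r) <= p * P')%N.
    apply: leq_trans (leq_mul (ltnW rP) (leqnn _)) _.
    rewrite mulnAC; apply: leq_mul => //; by rewrite mulnC leq_trunc_div.
  move: h1 small; set a := (s * (p %/ r))%N; set b := (p * P')%N; lia.
Qed.
End Lin.

Lemma card_bigcup_le (T : finType) m (F : nat -> {set T}) :
  (#|\bigcup_(i < m) F i| <= \sum_(i < m) #|F i|)%N.
Proof.
elim: m => [|m IH]; first by rewrite big_ord0 big_ord0 cards0.
rewrite big_ord_recr big_ord_recr /=.
by apply: leq_trans (leq_card_setU _ _).1 _; rewrite leq_add2r.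
Qed.

Lemma sub_swap (V : zmodType) (x x' y y' : V) : (x + y = x' + y' -> x - x' = y' - y)%R.
Proof. move=> e; apply/eqP; rewrite subr_eq addrAC [(y' + x')%R]addrC -e addrK //. Qed.

Section Alg.
Variables p n : nat.
Local Notation G := (Zpn p n).
Local Open Scope ring_scope.

Definition coverb (N : seq 'I_n) (s : nat) (AB : {set G} * {set G}) : bool :=
  [&& AB.1 \subset VN p N, AB.2 \subset VN p N,
      [forall v in VN p N, [exists a in AB.1, [exists b in AB.2, v == a + b]]],
      (#|AB.2| <= 2 * s)%N & (s * #|AB.1| <= 3 * maxn #|VN p N| s)%N].

Definition coverB N s : {set G} * {set G} :=
  if [pick AB | coverb N s AB] is Some AB then AB else (set0, set0).

Definition tstar s := up_log p s.

Definition Aset s (N : seq 'I_n) : {set G} :=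
  [set x.1 + x.2 | x in setX (coverB (take (tstar s) N) s).1 (VN p (drop (tstar s) N))].
Definition Bset s (N : seq 'I_n) : {set G} := (coverB (take (tstar s) N) s).2.

Definition Lpts (d : 'I_n) (A B : {set G}) : seq G :=
  enum [set ev p d + a | a in A] ++ enum [set - b | b in B].

Definition pickab (rel : G -> G -> bool) d (A B : {set G}) :=
  [pick ab : G * G | [&& ab.1 \in A, ab.2 \in B & rel (ev p d + ab.1) (- ab.2)]].

Fixpoint sweep (stop : bool) (s : nat) (ds N : seq 'I_n) (Ps : seq G) (spent : nat)
   : prog G (option (seq G)) :=
  match ds with
  | [::] => Ret (Some Ps)
  | d :: ds' =>
    if (10 * s < spent + #|Aset s N|)%N then Ret None else
    Look (Lpts d (Aset s N) (Bset s N)) (fun rel =>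
      match pickab rel d (Aset s N) (Bset s N) with
      | Some ab => if stop then Ret (Some [:: ev p d + ab.1 + ab.2])
                   else sweep stop s ds' N ((ev p d + ab.1 + ab.2) :: Ps) (spent + #|Aset s N|)
      | None => sweep stop s ds' (rcons N d) Ps (spent + #|Aset s N|)
      end)
  end.

Variable H : {set G}.

Definition pickH s d (N : seq 'I_n) :=
  pickab (relL H (Lpts d (Aset s N) (Bset s N))) d (Aset s N) (Bset s N).

Fixpoint TA (stop : bool) (s : nat) (ds N : seq 'I_n) (Ps : seq G) : nat :=
  match ds with
  | [::] => 0%N
  | d :: ds' => (#|Aset s N| +
      match pickH s d N with
      | Some ab => if stop then 0%N else TA stop s ds' N ((ev p d + ab.1 + ab.2)%R :: Ps)
      | None => TA stop s ds' (rcons N d) Ps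
      end)%N
  end.

Lemma sweep_complete stop s ds N Ps spent :
  (spent + TA stop s ds N Ps <= 10 * s)%N -> eval H (sweep stop s ds N Ps spent) <> None.
Proof.
elim: ds stop N Ps spent => [|d ds IH] stop N Ps spent //=.
rewrite addnA => hle; rewrite ltnNge (leq_trans (leq_addr _ _) hle) /=.
rewrite -/(pickH s d N); case: (pickH s d N) hle => [ab|] hle.
  by case: stop hle => // hle; apply: IH.
exact: IH.
Qed.

Lemma pickH_spec s d N :
  match pickH s d N with
  | Some ab => [/\ ab.1 \in Aset s N, ab.2 \in Bset s N & ev p d + ab.1 + ab.2 \in H]
  | None => forall a b, a \in Aset s N -> b \in Bset s N -> ev p d + a + b \notin H
  end.
Proof.
rewrite /pickH /pickab; case: pickP => [[a b]|] /=.
  case/and3P => ha hb; rewrite /relL /Lpts !mem_cat !mem_enum.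
  rewrite opprK; case/and3P => _ _ ->; done.
move=> h a b ha hb; move: (h (a, b)); rewrite /= ha hb /= /relL /Lpts !mem_cat !mem_enum.
rewrite opprK (imset_f _ ha) (imset_f _ hb) !orbT /=.
by move=> ->.
Qed.

End Alg.

Section AlgP.
Variables p n : nat.
Hypothesis pp : prime p.
Local Notation G := (Zpn p n).
Local Open Scope ring_scope.

Lemma coverbP (N : seq 'I_n) s (A B : {set G}) : reflect (coverR N s A B) (coverb N s (A, B)).
Proof.
rewrite /coverb /=; apply: (iffP idP).
  case/and5P => h1 h2 /forall_inP h3 h4 h5; split=> // v hv.
  have /exists_inP [a ha /exists_inP [b hb /eqP e]] := h3 v hv.
  by exists a => //; exists b.
case=> h1 h2 h3 h4 h5; rewrite h1 h2 h4 h5 /= andbT.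
apply/forall_inP => v hv; have [a ha [b hb e]] := h3 v hv.
by apply/exists_inP; exists a => //; apply/exists_inP; exists b => //; apply/eqP.
Qed.

Lemma coverB_spec (N : seq 'I_n) s : uniq N -> (0 < s)%N ->
  coverR N s (coverB p N s).1 (coverB p N s).2.
Proof.
move=> uN s0; rewrite /coverB; case: pickP => [[A B] /coverbP //|h].
have [A [B c]] := cover_exists pp uN s0.
by move: (h (A, B)); move/coverbP: c => ->.
Qed.

Definition restr (S : seq 'I_n) (v : G) : G := \row_j (if j \in S then v 0 j else 0).

Lemma AB_spec s (N : seq 'I_n) : uniq N -> (0 < s)%N ->
  [/\ Aset p s N \subset VN p N, Bset p s N \subset VN p N &
      forall v, v \in VN p N -> exists2 a, a \in Aset p s N & exists2 b, b \in Bset p s N & v = a + b].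
Proof.
move=> uN s0; set t := tstar p s.
have [sA sB cov _ _] := coverB_spec (take_uniq t uN) s0.
have sT : VN p (take t N) \subset VN p N by apply: VNS => j; apply: mem_take.
have sD : VN p (drop t N) \subset VN p N by apply: VNS => j; apply: mem_drop.
split.
- apply/subsetP => x /imsetP[[a b] /setXP[ha hb] ->] /=.
  by apply: VND; [apply: (subsetP sT); apply: (subsetP sA) | apply: (subsetP sD)].
- exact: subset_trans sB sT.
move=> v /VNP hv.
have h0 : restr (take t N) v \in VN p (take t N).
  by apply/VNP => j jn; rewrite mxE (negbTE jn).
have h1 : v - restr (take t N) v \in VN p (drop t N).
  apply/VNP => j jn; rewrite !mxE; case: ifP => jt; first by rewrite subrr.
  rewrite hv ?subr0 //; rewrite -(cat_take_drop t N) mem_cat jt /=; exact: jn.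
have [a ha [b hb e]] := cov _ h0.
exists (a + (v - restr (take t N) v)).
  by apply/imsetP; exists (a, v - restr (take t N) v) => //; apply/setXP.
by exists b => //; rewrite addrAC -e addrC subrK.
Qed.

Lemma Aset_card s (N : seq 'I_n) : uniq N -> (0 < s)%N ->
  (s * #|Aset p s N| <= 3 * #|VN p N| + 3 * s)%N.
Proof.
move=> uN s0; set t := tstar p s.
have [_ _ _ _ hA] := coverB_spec (take_uniq t uN) s0.
have cA : (#|Aset p s N| <= #|(coverB p (take t N) s).1| * #|VN p (drop t N)|)%N.
  by rewrite -cardsX; apply: leq_imset_card.
rewrite (card_VN pp (take_uniq t uN)) in hA; rewrite (card_VN pp (drop_uniq t uN)) in cA.
rewrite (card_VN pp uN).
rewrite size_take size_drop in hA cA.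
set a := #|(coverB p (take t N) s).1| in hA cA.
have sT : (s <= p ^ t)%N by apply: up_logP; apply: prime_gt1.
case: ltnP => [tN|Nt] in hA cA.
  have e : (p ^ size N = p ^ t * p ^ (size N - t))%N by rewrite -expnD subnKC // ltnW.
  rewrite e; rewrite (maxn_idPl sT) in hA.
  apply: leq_trans (leq_mul (leqnn s) cA) _; rewrite mulnA.
  apply: leq_trans (leq_addr _ _); rewrite mulnA; apply: leq_mul => //.
have e0 : (size N - t = 0)%N by apply/eqP; rewrite subn_eq0.
rewrite e0 expn0 muln1 in cA.
apply: leq_trans (leq_mul (leqnn s) cA) _; apply: leq_trans hA _.
rewrite -mulnDr leq_mul2l; apply/orP; right; rewrite geq_max leq_addr leq_addl //.
Qed.


Variable H : {set G}.
Hypothesis sgH : is_subgroup H.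
Variable s : nat.
Hypothesis s0 : (0 < s)%N.

Record Inv (ds N : seq 'I_n) (Ps : seq G) : Prop := {
  i_uds : uniq ds;
  i_uN : uniq N;
  i_dis : forall j, j \in N -> j \notin ds;
  i_Ps : forall u, u \in Ps -> u \in H /\ u \in W p ds;
  i_dec : forall w, w \in W p ds -> exists2 v, v \in VN p N & exists2 x, x \in spanS Ps & w = v + x;
  i_span : forall h, h \in H -> h \in W p ds -> h \in spanS Ps;
  i_triv : forall v, v \in H -> v \in VN p N -> v = 0 }.

Lemma Wcons (d : 'I_n) ds (w : G) : (w \in W p (d :: ds)) = (w \in W p ds) && (w 0 d == 0).
Proof.
apply/idP/andP => [/WP h|[/WP h /eqP hd]].
  by split; [apply/WP => j jd; apply: h; rewrite in_cons jd orbT | apply/eqP; apply: h; rewrite mem_head].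
by apply/WP => j; rewrite in_cons => /orP[/eqP ->|]; [| apply: h].
Qed.

Lemma VN_W (ds N : seq 'I_n) : (forall j, j \in N -> j \notin ds) -> VN p N \subset W p ds.
Proof.
move=> dis; apply/subsetP => v /VNP h; apply/WP => j jd; apply: h.
by apply/negP => jN; move: (dis _ jN); rewrite jd.
Qed.

Lemma sgZ (c : 'F_p) (u : G) : u \in H -> c *: u \in H.
Proof. by move=> hu; rewrite -(natr_F c) scaler_nat; apply: sgMn. Qed.

Lemma spanS_H Ps : (forall u, u \in Ps -> u \in H) -> spanS Ps \subset H.
Proof. exact: spanS_sub. Qed.

Lemma step_piv (d : 'I_n) ds N Ps (a b : G) : Inv (d :: ds) N Ps ->
  a \in Aset p s N -> b \in Bset p s N -> ev p d + a + b \in H ->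
  Inv ds N ((ev p d + a + b) :: Ps) /\ ev p d + a + b <> 0.
Proof.
move=> I ha hb hu; set u := ev p d + a + b in hu *.
have [sA sB _] := AB_spec (i_uN I) s0.
have dN : d \notin N by apply/negP => /(i_dis I); rewrite mem_head.
have /VNP a0 := subsetP sA _ ha; have /VNP b0 := subsetP sB _ hb.
have ud : u 0 d = 1 by rewrite /u !mxE eqxx a0 // b0 // !addr0.
have uds := i_uds I; rewrite /= in uds; case/andP: uds => dds uds.
have VW := VN_W (i_dis I).
have uW : u \in W p ds.
  apply/WP => j jd; rewrite /u !mxE.
  have jN : j \notin N by apply/negP => /(i_dis I); rewrite in_cons jd orbT.
  rewrite a0 // b0 // !addr0; case: eqP => // e; by rewrite -e jd in dds.
have Wsub : forall w, w \in W p (d :: ds) -> w \in W p ds by move=> w; rewrite Wcons => /andP[].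
clearbody u.
have cutW : forall w, w \in W p ds -> w - w 0 d *: u \in W p (d :: ds).
  move=> w hw; rewrite Wcons; apply/andP; split; first by apply: WB => //; apply: WZ.
  by rewrite !mxE ud mulr1 subrr.
split; last by move=> e; move: ud; rewrite e mxE => /eqP; rewrite eq_sym oner_eq0.
split.
- exact: uds.
- exact: (i_uN I).
- by move=> j /(i_dis I); rewrite in_cons negb_or => /andP[].
- move=> w; rewrite in_cons => /orP[/eqP ->|wP]; first by split.
  by have [h1 h2] := i_Ps I wP; split => //; apply: Wsub.
- move=> w hw; have [v hv [x hx e]] := i_dec I (cutW w hw).
  exists v => //; exists (w 0 d *: u + x); first exact: spanS_cons.
  by rewrite addrCA -e addrC subrK.
- move=> h hh hw; have := i_span I (sgB sgH hh (sgZ _ hu)) (cutW h hw).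
  by move=> hx; rewrite -[h](subrK (h 0 d *: u)) addrC; apply: spanS_cons.
- exact: (i_triv I).
Qed.


Lemma step_non (d : 'I_n) ds N Ps : Inv (d :: ds) N Ps ->
  (forall a b, a \in Aset p s N -> b \in Bset p s N -> ev p d + a + b \notin H) ->
  Inv ds (rcons N d) Ps.
Proof.
move=> I hno.
have [sA sB cov] := AB_spec (i_uN I) s0.
have dN : d \notin N by apply/negP => /(i_dis I); rewrite mem_head.
have uds := i_uds I; rewrite /= in uds; case/andP: uds => dds uds.
have Wsub : forall w, w \in W p (d :: ds) -> w \in W p ds by move=> w; rewrite Wcons => /andP[].
have PsH : forall u, u \in Ps -> u \in H by move=> u /(i_Ps I) [].
have triv' : forall v, v \in H -> v \in VN p (rcons N d) -> v = 0.
  move=> v hv /VNP vN.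
  case: (eqVneq (v 0 d) 0) => [vd0|vd].
    apply: (i_triv I) hv _; apply/VNP => j jN; case: (eqVneq j d) => [->//|jd].
    by apply: vN; rewrite mem_rcons in_cons negb_or jd.
  set u := (v 0 d)^-1 *: v.
  have hu : u \in H by apply: sgZ.
  have hu' : u - ev p d \in VN p N.
    apply/VNP => j jN; rewrite !mxE; case: (eqVneq j d) => [->|jd].
      by rewrite mulVf // subrr.
    rewrite (vN j); first by rewrite mulr0 /= mulr0n subrr.
    by rewrite mem_rcons in_cons negb_or jd.
  have [a ha [b hb e]] := cov _ hu'.
  by move: (hno a b ha hb); rewrite -addrA -e addrC subrK hu.
have dec' : forall w, w \in W p ds ->
    exists2 v, v \in VN p (rcons N d) & exists2 x, x \in spanS Ps & w = v + x.
  move=> w hw.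
  have hw' : w - w 0 d *: ev p d \in W p (d :: ds).
    rewrite Wcons; apply/andP; split.
      apply: WB => //; apply: WZ; apply/WP => j jd; rewrite mxE.
      by case: eqP => // e; rewrite -e jd in dds.
    by rewrite !mxE eqxx mulr1 subrr.
  have [v hv [x hx e]] := i_dec I hw'.
  exists (v + w 0 d *: ev p d).
    apply: VND; last by apply: VNZ; apply: ev_VN; rewrite mem_rcons mem_head.
    by apply: (subsetP (VNS p _)) hv => j jN; rewrite mem_rcons in_cons jN orbT.
  by exists x => //; rewrite addrAC -e subrK.
split.
- exact: uds.
- by rewrite rcons_uniq dN (i_uN I).
- move=> j; rewrite mem_rcons in_cons => /orP[/eqP ->//|/(i_dis I)].
  by rewrite in_cons negb_or => /andP[].
- by move=> u /(i_Ps I) [h1 h2]; split => //; apply: Wsub.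
- exact: dec'.
- move=> h hh hw; have [v hv [x hx e]] := dec' h hw.
  have vH : v \in H.
    have -> : v = h - x by rewrite e addrK.
    by apply: sgB => //; apply: (subsetP (spanS_H PsH)).
  by rewrite e (triv' v vH hv) add0r.
- exact: triv'.
Qed.

Lemma Inv_init : Inv (enum 'I_n) [::] [::].
Proof.
have W0' : forall w, w \in W p (enum 'I_n) -> w = 0.
  by move=> w /WP h; apply/rowP => j; rewrite mxE h // mem_enum.
split => //.
- exact: enum_uniq.
- by move=> w /W0' ->; exists 0; rewrite ?VN0 //; exists 0; rewrite ?inE ?addr0.
- by move=> h _ /W0' ->; rewrite inE.
- by move=> v _ /VNP h; apply/rowP => j; rewrite mxE h.
Qed.


Lemma card_W (ds : seq 'I_n) : uniq ds -> #|W p ds| = (p ^ (n - size ds))%N.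
Proof.
move=> uds; set Dc := enum (~: [set j in ds]).
have -> : #|W p ds| = #|VN p Dc|.
  apply: eq_card => w; apply/WP/VNP => h j.
    by rewrite mem_enum !inE negbK; apply: h.
  by move=> jd; apply: h; rewrite mem_enum !inE negbK.
rewrite card_VN ?enum_uniq // -cardE cardsCs setCK cardsE (card_uniqP uds) card_ord //.
Qed.

Lemma card_G : #|[set: G]| = (p ^ n)%N.
Proof. by rewrite cardsT card_mx card_Fp // mul1n. Qed.

Lemma Inv_card1 ds N Ps : Inv ds N Ps -> (p ^ size N * #|H| <= p ^ n)%N.
Proof.
move=> I; rewrite -(card_VN pp (i_uN I)) -card_G.
apply: card_sum_le => [x y _ _|x x' y y' hx hx' hy hy' e]; first by rewrite inE.
apply/eqP; rewrite -subr_eq0; apply/eqP; apply: (i_triv I); last exact: VNB.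
rewrite (sub_swap e).
exact: sgB.
Qed.

Lemma Inv_spanH ds N Ps : Inv ds N Ps -> spanS Ps \subset H.
Proof. by move=> I; apply: spanS_H => u /(i_Ps I) []. Qed.

Lemma Inv_cardW ds N Ps : Inv ds N Ps -> #|W p ds| = (p ^ size N * #|spanS Ps|)%N.
Proof.
move=> I; rewrite -(card_VN pp (i_uN I)).
have sH := Inv_spanH I.
have sW : spanS Ps \subset W p ds by apply: spanS_W => u /(i_Ps I) [].
have VW := VN_W (i_dis I).
apply: card_sum_eq.
- by move=> x y hx hy; apply: WD; [apply: (subsetP VW) | apply: (subsetP sW)].
- exact: (i_dec I).
- move=> x x' y y' hx hx' hy hy' e.
  apply/eqP; rewrite -subr_eq0; apply/eqP; apply: (i_triv I); last exact: VNB.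
  rewrite (sub_swap e).
  by apply: (sgB sgH); apply: (subsetP sH).
Qed.

Lemma Inv_card2 ds N Ps : Inv ds N Ps -> (p ^ (n - size ds) <= p ^ size N * #|H|)%N.
Proof.
move=> I; rewrite -(card_W (i_uds I)) (Inv_cardW I) leq_mul2l; apply/orP; right.
exact: subset_leq_card (Inv_spanH I).
Qed.

Lemma Inv_final N Ps : Inv [::] N Ps -> spanS Ps = H /\ (p ^ n = p ^ size N * #|H|)%N.
Proof.
move=> I.
have e : spanS Ps = H.
  apply/eqP; rewrite eqEsubset (Inv_spanH I) /=; apply/subsetP => h hh.
  by apply: (i_span I) hh _; apply/WP.
split => //; have := Inv_card2 I; have := Inv_card1 I; rewrite subn0 => h1 h2.
by apply/eqP; rewrite eqn_leq h1 h2.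
Qed.

Definition Good (stop : bool) (Ps : seq G) : Prop :=
  if stop then nilp Ps = (H == [set 0]) else spanS Ps = H.

Lemma sweep_ok (stop : bool) (ds N : seq 'I_n) (Ps : seq G) spent : Inv ds N Ps -> (stop -> Ps = [::]) ->
  forall Ps', eval H (sweep stop s ds N Ps spent) = Some Ps' -> Good stop Ps'.
Proof.
elim: ds stop N Ps spent => [|d ds IH] stop N Ps spent I hst Ps' /=.
  case=> <-; have [e _] := Inv_final I; rewrite /Good.
  case: stop hst => [/(_ isT) eP|_ //]; rewrite eP /= in e *.
  by rewrite -e /=; apply/esym/eqP.
case: ifP => // _ /=.
change (pickab (relL H (Lpts d (Aset p s N) (Bset p s N))) d (Aset p s N) (Bset p s N))
  with (pickH H s d N).
have := pickH_spec H s d N; case: (pickH H s d N) => [[a b] [ha hb hu]|hno] /=.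
  have [I' nz] := step_piv I ha hb hu.
  case: stop hst IH => hst IH /=.
    case=> <-; rewrite /Good /=; apply/esym/negP => /eqP eH.
    by move: hu; rewrite eH inE => /eqP.
  by move=> e; apply: (IH false _ _ _ I') e.
by move=> e; apply: (IH stop _ _ _ (step_non I hno) hst) e.
Qed.

Section Cost.
Variable k : nat.
Hypothesis hk : #|H| = (p ^ k)%N.
Local Notation m := (n - k)%N.

Lemma p1 : (1 < p)%N. Proof. exact: prime_gt1. Qed.

Lemma Inv_N (ds N : seq 'I_n) (Ps : seq G) : Inv ds N Ps -> (size N <= m)%N.
Proof.
move=> I; have := Inv_card1 I; rewrite hk -expnD leq_exp2l ?p1 //; lia.
Qed.

Lemma Inv_ds (ds N : seq 'I_n) (Ps : seq G) : Inv ds N Ps -> (m <= size N + size ds)%N.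
Proof.
move=> I; have := Inv_card2 I; rewrite hk -expnD leq_exp2l ?p1 //; lia.
Qed.

Lemma Acost (N : seq 'I_n) : uniq N -> (s * #|Aset p s N| <= 3 * p ^ size N + 3 * s)%N.
Proof. by move=> uN; rewrite -(card_VN pp uN); apply: Aset_card. Qed.

Lemma pexpS_ge e : (2 * p ^ e <= p ^ e.+1)%N.
Proof. by rewrite expnS leq_mul2r p1 orbT. Qed.

Lemma TA_stop (ds N : seq 'I_n) (Ps : seq G) : Inv ds N Ps ->
  (s * TA H true s ds N Ps <= 3 * s * (m - size N + 1) + 3 * (2 * p ^ m - p ^ size N))%N.
Proof.
elim: ds N Ps => [|d ds IH] N Ps I /=; first by rewrite muln0.
have hN := Inv_N I; have hA := Acost (i_uN I).
have hP : (p ^ size N <= p ^ m)%N by rewrite leq_exp2l ?p1.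
have := pickH_spec H s d N; case: (pickH H s d N) => [[a b] [ha hb hu]|hno] /=.
  rewrite addn0; move: hA hP; set P := (p ^ size N)%N; set Q := (p ^ m)%N.
  set A := #|Aset p s N|; set t := (m - size N)%N; nia.
have I' := step_non I hno; have := IH _ _ I'; have hN' := Inv_N I'.
rewrite size_rcons in hN' *.
have hP1 : (p ^ (size N).+1 <= p ^ m)%N by rewrite leq_exp2l ?p1.
have h2 := pexpS_ge (size N).
have -> : (m - (size N).+1 + 1 = m - size N)%N by lia.
move: hA hP hP1 h2 hN'; set P := (p ^ size N)%N; set Q := (p ^ m)%N.
set P1 := (p ^ (size N).+1)%N; set A := #|Aset p s N|.
set T := TA H true s ds (rcons N d) Ps.
set t := (m - size N)%N; nia.
Qed.

Lemma TA_ident (ds N : seq 'I_n) (Ps : seq G) : Inv ds N Ps ->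
  (s * TA H false s ds N Ps <= 3 * s * size ds +
     3 * ((size N + size ds - m) * p ^ m + p ^ m - p ^ size N))%N.
Proof.
elim: ds N Ps => [|d ds IH] N Ps I /=; first by rewrite muln0.
have hN := Inv_N I; have hA := Acost (i_uN I).
have hP : (p ^ size N <= p ^ m)%N by rewrite leq_exp2l ?p1.
have := pickH_spec H s d N; case: (pickH H s d N) => [[a b] [ha hb hu]|hno] /=.
  have [I' _] := step_piv I ha hb hu.
  have := IH _ _ I'; have hd := Inv_ds I'.
  have -> : (size N + (size ds).+1 - m = (size N + size ds - m) + 1)%N by lia.
  move: hA hP hd; set P := (p ^ size N)%N; set Q := (p ^ m)%N.
  set A := #|Aset p s N|; set T := TA H false s ds N _.
  set X := (size N + size ds - m)%N; nia.
have I' := step_non I hno; have := IH _ _ I'; have hN' := Inv_N I'.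
rewrite size_rcons in hN' *.
have hP1 : (p ^ (size N).+1 <= p ^ m)%N by rewrite leq_exp2l ?p1.
have h2 := pexpS_ge (size N).
move: hA hP hP1 h2 hN'; set P := (p ^ size N)%N; set Q := (p ^ m)%N.
set P1 := (p ^ (size N).+1)%N; set A := #|Aset p s N|.
set T := TA H false s ds (rcons N d) Ps.
have -> : ((size N).+1 + size ds = size N + (size ds).+1)%N by lia.
set X := (size N + (size ds).+1 - m)%N; nia.
Qed.

End Cost.
Definition BU (Nf : seq 'I_n) : {set G} :=
  \bigcup_(i < (tstar p s).+1) [set - b | b in (coverB p (take i Nf) s).2].

Lemma take_pre (N r : seq 'I_n) t : take t N = take (minn t (size N)) (N ++ r).
Proof.
case: (ltnP t (size N)) => h.
  by rewrite take_cat h.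
by rewrite take_cat ltnn subnn take0 cats0 take_oversize.
Qed.

Lemma Bpts_BU (N r : seq 'I_n) : [set - b | b in Bset p s N] \subset BU (N ++ r).
Proof.
rewrite /Bset (take_pre N r); set i := minn _ _.
have hi : (i < (tstar p s).+1)%N by rewrite ltnS geq_minl.
by apply: (bigcup_sup (Ordinal hi)).
Qed.

Lemma geom e : (\sum_(i < e.+1) p ^ i <= 2 * p ^ e)%N.
Proof.
elim: e => [|e IH]; first by rewrite big_ord1 expn0.
rewrite big_ord_recr /=; have := pexpS_ge e; move: IH; set S := (\sum_(i < e.+1) p ^ i)%N; set Q := (p ^ e)%N; set Q1 := (p ^ e.+1)%N; lia.
Qed.

Lemma BU_card Nf : uniq Nf -> (#|BU Nf| <= 4 * s)%N.
Proof.
move=> uN; rewrite /BU; apply: leq_trans (card_bigcup_le _ (fun i : nat => [set - b | b in (coverB p (take i Nf) s).2])) _.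
set t := tstar p s.
have hB : forall i, (#|[set - b | b in (coverB p (take i Nf) s).2]| <= #|(coverB p (take i Nf) s).2|)%N.
  by move=> i; apply: leq_imset_card.
rewrite big_ord_recr /=.
have [_ sB _ h2 _] := coverB_spec (take_uniq t uN) s0.
have hlast := leq_trans (hB t) h2.
have hsum : (\sum_(i < t) #|[set - b | b in (coverB p (take i Nf) s).2]| <= \sum_(i < t) p ^ i)%N.
  apply: leq_sum => i _; apply: leq_trans (hB i) _.
  have [_ sBi _ _ _] := coverB_spec (take_uniq i uN) s0.
  apply: leq_trans (subset_leq_card sBi) _.
  by rewrite (card_VN pp (take_uniq i uN)) leq_exp2l ?p1 // size_take; case: ifP => // /negbT; rewrite -leqNgt.
suff h : (\sum_(i < t) p ^ i <= 2 * s)%N.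
  by apply: leq_trans (leq_add (leq_trans hsum h) hlast) _; rewrite -mulnDl.
case: (posnP t) => [->|t0]; first by rewrite big_ord0.
have st : (1 < s)%N.
  by move: t0; rewrite /t /tstar up_log_gt0 => /andP[].
have := up_log_gtn p1 st; rewrite -/(tstar p s) -/t => hlt.
have := geom t.-1; rewrite prednK // => hg.
by apply: leq_trans hg _; rewrite leq_mul2l /= ltnW.
Qed.

Lemma sweep_pts (stop : bool) (ds N : seq 'I_n) (Ps : seq G) spent :
  uniq (N ++ ds) -> (spent <= 10 * s)%N ->
  exists2 Xa : {set G}, (spent + #|Xa| <= 10 * s)%N &
  exists2 Nf, (uniq Nf /\ exists r, Nf = N ++ r) &
    [set x in pts H (sweep stop s ds N Ps spent)] \subset Xa :|: BU Nf.
Proof.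
elim: ds N Ps spent => [|d ds IH] N Ps spent uN sp /=.
  exists set0; rewrite ?cards0 ?addn0 //; exists N.
    by split; [rewrite cats0 in uN | exists [::]; rewrite cats0].
  by apply/subsetP => x; rewrite inE.
have uNN : uniq N by move: uN; rewrite cat_uniq => /and3P[].
have base : exists2 Xa : {set G}, (spent + #|Xa| <= 10 * s)%N &
  exists2 Nf, (uniq Nf /\ exists r, Nf = N ++ r) & [set x in [::]] \subset Xa :|: BU Nf.
  exists set0; rewrite ?cards0 ?addn0 //; exists N.
    by split; [exact: uNN | exists [::]; rewrite cats0].
  by apply/subsetP => x; rewrite inE.
case: ifP => [_ //|/negbT]; rewrite -leqNgt => hle /=.
change (pickab (relL H (Lpts d (Aset p s N) (Bset p s N))) d (Aset p s N) (Bset p s N))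
  with (pickH H s d N).
set Apts := [set ev p d + a | a in Aset p s N].
have hLA : forall r, [set x in Lpts d (Aset p s N) (Bset p s N)] \subset Apts :|: BU (N ++ r).
  move=> r; apply/subsetP => x; rewrite inE /Lpts mem_cat !mem_enum => /orP[hx|hx].
    by rewrite !inE hx.
  by rewrite inE (subsetP (Bpts_BU N r)) ?orbT.
have cA : (#|Apts| <= #|Aset p s N|)%N by apply: leq_imset_card.
have uN' : uniq (N ++ ds).
  by move: uN; rewrite !cat_uniq /= => /and3P[-> /norP[_ ->] /andP[_ ->]].
have uN'' : uniq (rcons N d ++ ds) by rewrite cat_rcons.
have comb : forall (rest : seq G) (Xa' : {set G}) r', uniq (N ++ r') ->
    (spent + #|Aset p s N| + #|Xa'| <= 10 * s)%N ->
    [set x in rest] \subset Xa' :|: BU (N ++ r') ->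
    exists2 Xa : {set G}, (spent + #|Xa| <= 10 * s)%N &
    exists2 Nf, (uniq Nf /\ exists r, Nf = N ++ r) &
      [set x in Lpts d (Aset p s N) (Bset p s N) ++ rest] \subset Xa :|: BU Nf.
  move=> rest Xa' r' u' c' s'; exists (Apts :|: Xa').
    apply: leq_trans _ c'; rewrite -addnA leq_add2l.
    by apply: leq_trans (leq_card_setU _ _).1 _; rewrite leq_add2r.
  exists (N ++ r'); first by split => //; exists r'.
  apply/subsetP => x; rewrite inE mem_cat => /orP[hx|hx].
    have := subsetP (hLA r') x; rewrite inE hx => /(_ isT); rewrite !inE.
    by case/orP => ->; rewrite ?orbT.
  have := subsetP s' x; rewrite inE hx => /(_ isT); rewrite !inE.
  by case/orP => ->; rewrite ?orbT.
case: (pickH H s d N) => [ab|].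
  case: stop IH => IH /=.
    apply: (comb [::] set0 [::]); rewrite ?cats0 ?cards0 ?addn0 //.
    by apply/subsetP => x; rewrite inE.
  have [Xa' c' [Nf' [u' [r' e]] s']] := IH N (ev p d + ab.1 + ab.2 :: Ps) (spent + #|Aset p s N|)%N uN' hle.
  subst Nf'; exact: comb u' c' s'.
have [Xa' c' [Nf' [u' [r' e]] s']] := IH (rcons N d) Ps (spent + #|Aset p s N|)%N uN'' hle.
subst Nf'; rewrite cat_rcons in u' s'.
exact: comb u' c' s'.
Qed.

End AlgP.

Lemma card_cat_le (T : finType) (s1 s2 : seq T) :
  (#|[set x in s1 ++ s2]| <= #|[set x in s1]| + #|[set x in s2]|)%N.
Proof.
apply: leq_trans (leq_card_setU _ _).1; apply: subset_leq_card.
by apply/subsetP => x; rewrite !inE mem_cat.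
Qed.

Section Rounds.
Variables p n : nat.
Local Notation G := (Zpn p n).

Fixpoint rounds (stop : bool) (j fuel : nat) : prog G (option (seq G)) :=
  match fuel with
  | 0 => Ret None
  | f.+1 => bind (sweep stop (2 ^ j) (enum 'I_n) [::] [::] 0)
                 (fun o => if o is Some _ then Ret o else rounds stop j.+1 f)
  end.

Hypothesis pp : prime p.
Variable H : {set G}.
Hypothesis sgH : is_subgroup H.

Lemma Inv_reach (ds N : seq 'I_n) (Ps : seq G) : Inv H ds N Ps -> exists Nf Psf, Inv H [::] Nf Psf.
Proof.
have s0 : (0 < 1)%N by [].
set s := 1%N.
elim: ds N Ps => [|d ds IH] N Ps I; first by exists N, Ps.
have := pickH_spec H s d N; case: (pickH H s d N) => [[a b] [ha hb hu]|hno].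
  have [I' _] := step_piv pp sgH s0 I ha hb hu; exact: IH I'.
exact: IH (step_non pp sgH s0 I hno).
Qed.

Lemma card_H : exists e, #|H| = (p ^ e)%N.
Proof.
have [Nf [Psf I]] := Inv_reach (Inv_init H).
have [_ e] := Inv_final pp sgH I.
have H0 : (0 < #|H|)%N by apply/card_gt0P; exists 0%R; apply: sg0.
have hle : (size Nf <= n)%N.
  by rewrite -(leq_exp2l _ _ (prime_gt1 pp)) e leq_pmulr.
exists (n - size Nf)%N; apply/eqP.
have pg : (0 < p ^ size Nf)%N by rewrite expn_gt0 prime_gt0.
by rewrite -(eqn_pmul2l pg) -expnD subnKC // -e.
Qed.

Variable k : nat.
Hypothesis hk : #|H| = (p ^ k)%N.
Local Notation m := (n - k)%N.

Lemma k_le_n : (k <= n)%N.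
Proof.
rewrite -(leq_exp2l _ _ (prime_gt1 pp)) -hk -(card_G n pp).
by apply: subset_leq_card; apply/subsetP => x; rewrite inE.
Qed.

Definition cond (stop : bool) (s : nat) : bool :=
  if stop then (m.+1 <= s)%N && (2 * p ^ m <= s * s)%N
  else (n <= s)%N && (k.+1 * p ^ m <= s * s)%N.

Lemma round_good stop s Ps : (0 < s)%N ->
  eval H (sweep stop s (enum 'I_n) [::] [::] 0) = Some Ps -> Good H stop Ps.
Proof.
move=> s0; by apply: (sweep_ok pp sgH s0 (Inv_init H)).
Qed.

Lemma round_cost stop s : (0 < s)%N ->
  (#|[set x in pts H (sweep stop s (enum 'I_n) [::] [::] 0)]| <= 14 * s)%N.
Proof.
move=> s0.
have u0 : uniq ([::] ++ enum 'I_n) by rewrite cat0s enum_uniq.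
have [Xa c [Nf [uNf _] sub]] := sweep_pts H (s:=s) (ds:=enum 'I_n) (N:=[::]) stop [::] u0 (leq0n _).
apply: leq_trans (subset_leq_card sub) _.
apply: leq_trans (leq_card_setU _ _).1 _.
rewrite add0n in c; apply: leq_trans (leq_add c (BU_card pp s0 uNf)) _; lia.
Qed.


Lemma round_complete stop s : (0 < s)%N -> cond stop s ->
  eval H (sweep stop s (enum 'I_n) [::] [::] 0) <> None.
Proof.
move=> s0 hc; apply: sweep_complete; rewrite add0n -(leq_pmul2l s0).
have kn := k_le_n.
case: stop hc => /andP[h1 h2].
  have := TA_stop pp sgH s0 hk (Inv_init H); rewrite /= expn0.
  move: h1 h2; set Q := (p ^ m)%N; set T := TA _ _ _ _ _ _; nia.
have := TA_ident pp sgH s0 hk (Inv_init H); rewrite /= expn0 size_enum_ord add0n.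
have -> : (n - m = k)%N by lia.
move: h1 h2; set Q := (p ^ m)%N; set T := TA _ _ _ _ _ _; nia.
Qed.

Lemma rounds_spec stop fuel j j0 : cond stop (2 ^ j0) -> (j <= j0 < j + fuel)%N ->
  (exists2 Ps, eval H (rounds stop j fuel) = Some Ps & Good H stop Ps) /\
  (#|[set x in pts H (rounds stop j fuel)]| + 14 * 2 ^ j <= 14 * 2 ^ j0.+1)%N.
Proof.
move=> hc; elim: fuel j => [|f IH] j /andP[hj hj0]; first by rewrite addn0 in hj0; lia.
rewrite /= eval_bind pts_bind.
have s0 : (0 < 2 ^ j)%N by rewrite expn_gt0.
have hcost := round_cost stop s0.
case e: (eval H (sweep stop (2 ^ j) (enum 'I_n) [::] [::] 0)) => [Ps|] /=.
  split; first by exists Ps => //; apply: round_good e.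
  rewrite cats0; apply: leq_trans (leq_add hcost (leqnn _)) _.
  rewrite -mulnDr addnn -mul2n -expnS leq_mul2l leq_exp2l //=.
have jj0 : j != j0.
  by apply/eqP => ej; subst j; apply: (round_complete s0 hc); rewrite e.
have hj' : (j.+1 <= j0 < j.+1 + f)%N.
  by apply/andP; split; [rewrite ltn_neqAle jj0 hj | rewrite addSnnS].
have [IH1 IH2] := IH j.+1 hj'.
split => //.
apply: leq_trans _ IH2.
apply: leq_trans (leq_add (card_cat_le _ _) (leqnn _)) _.
move: hcost; set X := #|[set x in pts H _]|; rewrite expnS; set Y := #|[set x in pts H (rounds _ _ _)]|; set Z := (2 ^ j)%N; lia.
Qed.

End Rounds.

Lemma INR_muln a b : INR (a * b)%N = Rmult (INR a) (INR b).
Proof. by rewrite -mult_INR. Qed.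

Lemma real_fin1 (q C X : nat) : (q * q <= C * C * X)%N -> Rle (INR q) (Rmult (INR C) (sqrt (INR X))).
Proof.
move=> h.
have hq : INR q = sqrt (INR (q * q)) by rewrite INR_muln sqrt_square //; apply: pos_INR.
have hC : Rmult (INR C) (sqrt (INR X)) = sqrt (INR (C * C * X)).
  rewrite !INR_muln sqrt_mult_alt; last by apply: Rmult_le_pos; apply: pos_INR.
  by rewrite sqrt_square //; apply: pos_INR.
rewrite hq hC; apply: sqrt_le_1_alt; apply: le_INR; exact/leP.
Qed.

Lemma real_fin2 (q C k Y : nat) : (q * q <= C * C * maxn (k * k) Y)%N ->
  Rle (INR q) (Rmult (INR C) (Rmax (INR k) (sqrt (INR Y)))).
Proof.
move=> h; have hC : Rle 0 (INR C) by apply: pos_INR.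
case: (leqP Y (k * k)) => hY.
  rewrite (maxn_idPl hY) in h.
  have : (q <= C * k)%N.
    rewrite -(leq_sqr q (C * k)) !expnS !expn0 !muln1; move: h; set a := (C * k)%N.
    by rewrite mulnACA mulnA -/a.
  move=> /leP /le_INR; rewrite INR_muln => hq.
  apply: Rle_trans hq _; apply: Rmult_le_compat_l => //; apply: Rmax_l.
rewrite (maxn_idPr (ltnW hY)) in h.
apply: Rle_trans (real_fin1 h) _; apply: Rmult_le_compat_l => //; apply: Rmax_r.
Qed.

Lemma sq_pow2 m : (m.+1 * m.+1 <= 4 * 2 ^ m)%N.
Proof.
elim: m => [|m IH] //; case: m IH => [|[|m]] IH //.
rewrite expnS; move: IH; set Z := (2 ^ m.+2)%N; nia.
Qed.

Lemma sq_pow p m : (1 < p)%N -> (m.+1 * m.+1 <= 4 * p ^ m)%N.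
Proof.
move=> p1; apply: leq_trans (sq_pow2 m) _; rewrite leq_mul2l /=.
case: m => [|m] //; by rewrite leq_exp2r.
Qed.

Lemma minpow A B j0 : (forall j, (A <= 2 ^ j)%N && (B <= 2 ^ j * 2 ^ j)%N -> (j0 <= j)%N) ->
  (2 ^ j0 * 2 ^ j0 <= 4 * A * A + 4 * B + 1)%N.
Proof.
case: j0 => [|j] hmin; first by rewrite expn0; lia.
have : ~~ ((A <= 2 ^ j)%N && (B <= 2 ^ j * 2 ^ j)%N).
  by apply/negP => c; have := hmin _ c; rewrite ltnn.
rewrite expnS; set Z := (2 ^ j)%N; case/nandP; rewrite -ltnNge => h; nia.
Qed.

Lemma big_s p n : (1 <= n)%N -> ((n.+1) * p ^ n <= 2 ^ (n * p + n + 1))%N.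
Proof.
move=> n1; rewrite -addnA expnD mulnC; apply: leq_mul.
  by rewrite mulnC expnM leq_exp2r // ltnW // ltn_expl.
by rewrite addn1 ltnW // ltn_expl.
Qed.

Section Main.
Variables p n : nat.
Hypothesis pp : prime p.
Hypothesis n1 : (1 <= n)%N.
Local Notation G := (Zpn p n).
Variable H : {set G}.
Hypothesis sgH : is_subgroup H.
Variable k : nat.
Hypothesis hk : #|H| = (p ^ k)%N.
Local Notation m := (n - k)%N.
Local Notation J := (n * p + n + 2)%N.

Lemma main_round stop : exists j0,
  [/\ (exists2 Ps, eval H (rounds p n stop 0 J) = Some Ps & Good H stop Ps),
      (#|[set x in pts H (rounds p n stop 0 J)]| <= 28 * 2 ^ j0)%N &
      (forall j, cond p n k stop (2 ^ j) -> (j0 <= j)%N)].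
Proof.
have kn := k_le_n pp hk.
have hJ : cond p n k stop (2 ^ (n * p + n + 1)).
  have := big_s p n1.
  set s := (2 ^ _)%N => hs.
  have Pm : (p ^ m <= p ^ n)%N by rewrite leq_exp2l ?prime_gt1 //; lia.
  have Pn : (0 < p ^ n)%N by rewrite expn_gt0 prime_gt0.
  move: hs Pm Pn; set Q := (p ^ m)%N; set P := (p ^ n)%N => hs Pm Pn.
  by rewrite /cond; case: stop; apply/andP; split; nia.
have hex : exists j, cond p n k stop (2 ^ j) by exists (n * p + n + 1)%N.
exists (ex_minn hex); case: ex_minnP => j0 hc hmin.
have hj : (0 <= j0 < 0 + J)%N by rewrite add0n; have := hmin _ hJ; lia.
have [h1 h2] := rounds_spec pp sgH hk hc hj.
split => //; rewrite expn0 muln1 in h2.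
by apply: leq_trans (leq_trans (leq_addr 14 _) h2) _; rewrite expnS; lia.
Qed.

End Main.

Theorem corollary1 :
  exists C : R, Rlt R0 C /\
  forall (p n : nat), prime p -> (1 <= n)%N ->
    (exists A : qtree (Zpn p n) bool,
       forall (X : finType) (f : Zpn p n -> X) (H : {set Zpn p n}),
         is_subgroup H -> hides f H ->
         output A f = (H == [set 0%R]) /\
         Rle (INR (nqueries A f))
             (Rmult C (sqrt (INR (p ^ (n - logn p #|H|)))))) /\
    (exists A : qtree (Zpn p n) {set Zpn p n},
       forall (X : finType) (f : Zpn p n -> X) (H : {set Zpn p n}),
         is_subgroup H -> hides f H ->
         let k := logn p #|H| in
         output A f = H /\
         Rle (INR (nqueries A f))
             (Rmult C (Rmax (INR k) (sqrt (INR (maxn 1 k * p ^ (n - k))))))).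
Proof.
exists (INR 280); split; first by apply: lt_0_INR; apply/ltP.
move=> p n pp n1; have p1 := prime_gt1 pp; split.
- exists (cmp (bind (rounds p n true 0 (n * p + n + 2))
     (fun o => Ret (if o is Some Ps then nilp Ps else false))) [::] [::]).
  move=> X f H sgH hf.
  have [e he] := card_H pp sgH.
  set k := logn p #|H|.
  have hk : #|H| = (p ^ k)%N by rewrite /k he pfactorK.
  have [j0 [[Ps e1 g1] hc hmin]] := main_round pp n1 sgH hk true.
  have [o1 o2] := nq_cmp (hides_rel sgH hf) (bind (rounds p n true 0 (n * p + n + 2))
     (fun o => Ret (if o is Some Ps then nilp Ps else false))).
  rewrite eval_bind e1 /= in o1; rewrite pts_bind e1 /= cats0 in o2.
  split; first by rewrite o1 g1.
  apply: real_fin1.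
  have hx := minpow hmin.
  have sq := sq_pow (n - k) p1.
  have P1 : (0 < p ^ (n - k))%N by rewrite expn_gt0 ltnW.
  move: (leq_trans o2 hc) hx sq P1.
  set q := nqueries _ f; set x := (2 ^ j0)%N; set P := (p ^ (n - k))%N; set a := (n - k).+1.
  move=> hq hx sq P1.
  have hq2 : (q * q <= (28 * x) * (28 * x))%N by apply: leq_mul.
  move: hq2 hx sq P1; set xx := (x * x)%N; set aa := (a * a)%N; set qq := (q * q)%N.
  have -> : (28 * x * (28 * x) = 784 * xx)%N by rewrite /xx; lia.
  lia.
- exists (cmp (bind (rounds p n false 0 (n * p + n + 2))
     (fun o => Ret (if o is Some Ps then spanS Ps else set0))) [::] [::]).
  move=> X f H sgH hf k.
  have [e he] := card_H pp sgH.
  have hk : #|H| = (p ^ k)%N by rewrite /k he pfactorK.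
  have kn := k_le_n pp hk.
  have [j0 [[Ps e1 g1] hc hmin]] := main_round pp n1 sgH hk false.
  have [o1 o2] := nq_cmp (hides_rel sgH hf) (bind (rounds p n false 0 (n * p + n + 2))
     (fun o => Ret (if o is Some Ps then spanS Ps else set0))).
  rewrite eval_bind e1 /= in o1; rewrite pts_bind e1 /= cats0 in o2.
  split; first by rewrite o1 g1.
  apply: real_fin2.
  have hx := minpow hmin.
  have sq := sq_pow (n - k) p1.
  have P1 : (0 < p ^ (n - k))%N by rewrite expn_gt0 ltnW.
  move: (leq_trans o2 hc) hx sq P1.
  set q := nqueries _ f; set x := (2 ^ j0)%N; set P := (p ^ (n - k))%N.
  move=> hq hx sq P1.
  have hq2 : (q * q <= (28 * x) * (28 * x))%N by apply: leq_mul.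
  have hn : (n * n <= 4 * (k * k) + 4 * ((n - k) * (n - k)))%N.
    have en : n = (k + (n - k))%N by rewrite subnKC.
    set m' := (n - k)%N in en *.
    have h1 : (n * n <= (2 * maxn k m') * (2 * maxn k m'))%N.
      by apply: leq_mul; rewrite en; lia.
    apply: leq_trans h1 _; rewrite mulnACA -mulnDr leq_mul2l /=.
    by case: (leqP k m') => h; [rewrite leq_addl | rewrite leq_addr].
  have hM1 : (k * k <= maxn (k * k) (maxn 1 k * P))%N by apply: leq_maxl.
  have hM2 : (maxn 1 k * P <= maxn (k * k) (maxn 1 k * P))%N by apply: leq_maxr.
  have hkP : (k.+1 * P <= 2 * (maxn 1 k * P))%N.
    rewrite mulnA leq_mul2r; apply/orP; right; lia.
  have hP : (P <= maxn 1 k * P)%N by apply: leq_pmull; lia.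
  move: hq2 hx sq hn hM1 hM2 hkP hP.
  set M := maxn (k * k) _; set M2 := (maxn 1 k * P)%N.
  set xx := (x * x)%N; set qq := (q * q)%N; set kk := (k * k)%N; set nn := (n * n)%N.
  set mm := ((n - k).+1 * (n - k).+1)%N; set mm' := ((n - k) * (n - k))%N.
  have hmm : (mm' <= mm)%N by rewrite /mm /mm'; apply: leq_mul.
  have -> : (28 * x * (28 * x) = 784 * xx)%N by rewrite /xx; lia.
  have -> : (4 * n * n = 4 * nn)%N by rewrite /nn; lia.
  move=> *; lia.
Qed.
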